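(* Let $X$ be a compact metric space and $(f_n)_{n\ge1}$ a sequence of continuous maps $X\to X$. Then for all $p,q\in\mathbb{N}^*$ and all $x\in X$, $$f_1^{p+q}(x)=q\text{-}\lim_{n\to\infty}f_1^{p+n}(x).$$
   Context: $\mathbb{N}=\{1,2,\dots\}$, $\beta(\mathbb{N})$ the ultrafilters on $\mathbb{N}$, $\mathbb{N}^*$ the free ones. For $r\in\mathbb{N}^*$, $r\text{-}\lim_n x_n$ is the unique $y$ with $\{n:x_n\in V\}\in r$ for all neighbourhoods $V$ of $y$. $f_1^n=f_n\circ\cdots\circ f_1$ and $f_1^r(x)=r\text{-}\lim_n f_1^n(x)$ for $r\in\mathbb{N}^*$. Addition: $p+n=\{A:\{m:m+n\in A\}\in p\}$ and $p+q=\{A:\{n:\{m:m+n\in A\}\in p\}\in q\}$; for $p\in\mathbb{N}^*$ these are free ultrafilters. *)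

(* Defs.v *)
From HB Require Import structures.
From mathcomp Require Import all_boot all_order all_algebra.
From mathcomp Require Import all_classical all_reals all_analysis.
Set Implicit Arguments. Unset Strict Implicit. Unset Printing Implicit Defensive.
Import Order.TTheory GRing.Theory Num.Theory.
Local Open Scope classical_set_scope.

(* Ultrafilters on nat are [r : set_system nat] with [UltraFilter r] (library
   class).  Free ultrafilter: contains no singleton. Index 0 of nat plays no
   role for free ultrafilters. *)
Definition free_ultra (r : set_system nat) : Prop := forall n : nat, ~ r [set n].

Definition ushift (p : set_system nat) (n : nat) : set_system nat :=
  [set A | p [set m | A (m + n)%N]].
Definition usum (p q : set_system nat) : set_system nat :=
  [set A | q [set n | p [set m | A (m + n)%N]]].

(* r-lim_n u_n : the (unique, in a compact Hausdorff space) y such that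
   {n | u n \in V} \in r for every neighbourhood V of y. *)
Definition rlim {T : topologicalType} (r : set_system nat) (u : nat -> T) : T :=
  xget (u 0%N) [set y | forall V, nbhs y V -> r [set n | V (u n)]].

(* f_1^n = f_n o ... o f_1 (f_1^0 = id); f 0 is unused. *)
Fixpoint fcomp {T : Type} (f : nat -> T -> T) (n : nat) (x : T) : T :=
  match n with
  | 0%N => x
  | n'.+1 => f n'.+1 (fcomp f n' x)
  end.

Definition fulim {T : topologicalType} (f : nat -> T -> T) (r : set_system nat) (x : T) : T :=
  rlim r (fun n => fcomp f n x).

(* Main.v *)
Require Import Defs.
From HB Require Import structures.
From mathcomp Require Import all_boot all_order all_algebra.
From mathcomp Require Import all_classical all_reals all_analysis.
Local Open Scope classical_set_scope.

Lemma rlim_spec (X : topologicalType) (cX : compact [set: X])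
  (r : set_system nat) (Pr : ProperFilter r)
  (spl : forall A, r A \/ r (~` A)) (u : nat -> X) :
  forall V, nbhs (rlim r u) V -> r [set n | V (u n)].
Proof.
rewrite /rlim; apply: (@xgetPex _ (u 0%N) [set y | forall V, nbhs y V -> r [set n | V (u n)]]).
have [y [_ cly]] := cX (fmap u r) (fmap_proper_filter u Pr) (filterT).
exists y => V nV.
case: (spl [set n | V (u n)]) => // rC; exfalso.
have [z [/= [k nVk <-] Vz]] := cly (u @` (~` [set n | V (u n)])) V (filterS (fun k hk => ex_intro2 _ _ k hk erefl) rC) nV.
exact: nVk Vz.
Qed.

Lemma usum_proper (p q : set_system nat) (Up : ProperFilter p) (Uq : ProperFilter q) :
  ProperFilter (usum p q).
Proof.
split.
  rewrite /usum /=.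
  have -> : [set n | p [set m | @set0 nat (m + n)%N]] = set0.
    by apply/seteqP; split => n //= ; rewrite (_ : [set m | _] = set0) //; exact: filter_not_empty.
  exact: filter_not_empty.
split.
- rewrite /usum /=; apply: filterS (filterT) => n _; exact: filterT.
- move=> A B; rewrite /usum /= => hA hB.
  apply: filterS (filterI hA hB) => n [a b]; exact: filterI a b.
- move=> A B AB; rewrite /usum /=; apply: filterS => n.
  by apply: filterS => m; apply: AB.
Qed.

Theorem lemma3p8 (R : realType) (X : metricType R)
    (cX : compact [set: X]) (f : nat -> X -> X)
    (fc : forall n : nat, (0 < n)%N -> continuous (f n))
    (p q : set_system nat) (Up : UltraFilter p) (Uq : UltraFilter q)
    (fp : free_ultra p) (fq : free_ultra q) (x : X) :
  fulim f (usum p q) x = rlim q (fun n => fulim f (ushift p n) x).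
Proof.
set y := fun n => fulim f (ushift p n) x.
have Hy : forall n V, nbhs (y n) V -> p [set m | V (fcomp f (m + n)%N x)].
  move=> n V nV.
  have PF : ProperFilter (ushift p n).
    exact: (fmap_proper_filter (fun m => (m + n)%N) ultra_proper).
  have spl : forall A, ushift p n A \/ ushift p n (~` A).
    move=> A; exact: (in_ultra_setVsetC _ Up).
  exact: (@rlim_spec X cX (ushift p n) PF spl (fun m => fcomp f m x) V nV).
have Hz : forall V, nbhs (rlim q y) V -> q [set n | V (y n)].
  move=> V nV.
  have spl : forall A, q A \/ q (~` A).
    move=> A; exact: (in_ultra_setVsetC _ Uq).
  exact: (@rlim_spec X cX q ultra_proper spl y V nV).
have PS := @usum_proper p q (@ultra_proper nat p Up) (@ultra_proper nat q Uq) : ProperFilter (usum p q).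
rewrite /fulim /rlim.
apply: xget_subset1.
  move=> V; rewrite nbhsE => -[U [oU Uz] UV].
  have := Hz U (open_nbhs_nbhs (conj oU Uz)).
  rewrite /usum /=; apply: filterS => n Uyn.
  have := Hy n U (open_nbhs_nbhs (conj oU Uyn)).
  by apply: filterS => m /UV.
move=> a b Ha Hb.
have FP : ProperFilter ((fun n => fcomp f n x) @ usum p q).
  exact: fmap_proper_filter.
exact: (@cvg_unique X (@metric_hausdorff R X) _ FP a b Ha Hb).
Qed.
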